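(* Let $A$ be a bivariate copula and $K_A$ a version of its Markov kernel such that the function $(x,y)\mapsto K_A(x,[0,y])$ on $[0,1]^2$ has a discontinuity. Then the sequence $(\Delta_N)_{N\in\mathbb{N}}$ given by $$\Delta_N:=\sup_{(x,y)\in[0,1]^2}\left|K_{\mathcal{CB}_N(A)}(x,[0,y])-K_A(x,[0,y])\right|$$ does not converge to $0$ as $N\to\infty$.
   Context: A (bivariate) copula is a distribution function on $[0,1]^2$ with uniform marginals; each copula $B$ corresponds to a doubly stochastic measure $\mu_B$ with $B(x,y)=\mu_B([0,x]\times[0,y])$. A Markov kernel of $B$ is a map $K_B:[0,1]\times\mathcal{B}([0,1])\to[0,1]$, measurable in the first argument, a probability measure in the second, with $\int_{E_1}K_B(x,E_2)\,d\lambda(x)=\mu_B(E_1\times E_2)$ for all Borel $E_1,E_2$ ($\lambda$ = Lebesgue measure). Checkerboard approximation: $I_1^N=[0,\tfrac1N]$, $I_i^N=(\tfrac{i-1}N,\tfrac iN]$ ($i=2,\dots,N$), $Q_{i,j}^N=I_i^N\times I_j^N$; $\mathcal{CB}_N(A)$ is the absolutely continuous copula with density $N^2\sum_{i,j=1}^N\mu_A(Q^N_{i,j})\mathbf 1_{Q^N_{i,j}}$, and its Markov kernel is the version $K_{\mathcal{CB}_N(A)}(x,[0,y])=N^2\sum_{i,j=1}^N\mu_A(Q^N_{i,j})\mathbf 1_{I^N_i}(x)\,\lambda([0,y]\cap I^N_j)$. *)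

(* Defs.v *)
From HB Require Import structures.
From mathcomp Require Import all_boot all_order all_algebra.
From mathcomp Require Import all_classical all_reals all_analysis measurable_realfun.
Set Implicit Arguments. Unset Strict Implicit. Unset Printing Implicit Defensive.
Import Order.TTheory GRing.Theory Num.Theory.
Import numFieldNormedType.Exports.
Local Open Scope classical_set_scope.
Local Open Scope ring_scope.

Section CopulaDefs.
Context {R : realType}.

Definition Icc (a b : R) : set R := [set` `[a, b]%R].
Definition Ioc (a b : R) : set R := [set` `]a, b]%R].

Definition unit_sq : set (R * R) := (Icc 0 1) `*` (Icc 0 1).

Definition is_copula (A : R -> R -> R) : Prop :=
  (forall x, 0 <= x <= 1 ->
     [/\ A x 0 = 0, A 0 x = 0, A x 1 = x & A 1 x = x]) /\
  (forall x1 x2 y1 y2, 0 <= x1 -> x1 <= x2 -> x2 <= 1 ->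
     0 <= y1 -> y1 <= y2 -> y2 <= 1 ->
     0 <= A x2 y2 - A x1 y2 - A x2 y1 + A x1 y1).

(** [mu] is the doubly stochastic measure mu_A of the copula A (extended by
    zero outside [0,1]^2): B(x,y) = mu([0,x] x [0,y]) *)
Definition is_copula_measure (A : R -> R -> R)
    (mu : set (R * R) -> \bar R) : Prop :=
  mu (~` unit_sq) = 0%E /\
  (forall x y, 0 <= x <= 1 -> 0 <= y <= 1 ->
     mu ((Icc 0 x) `*` (Icc 0 y)) = (A x y)%:E).

Definition is_markov_kernel (mu : set (R * R) -> \bar R)
    (K : R -> probability R R) : Prop :=
  [/\ (forall x, 0 <= x <= 1 -> K x (Icc 0 1) = 1%E),
      (forall E : set R, measurable E ->
         measurable_fun (Icc 0 1) (fun x => K x E)) &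
      (forall E1 E2 : set R, measurable E1 -> measurable E2 ->
         E1 `<=` (Icc 0 1) -> E2 `<=` (Icc 0 1) ->
         (\int[lebesgue_measure]_(x in E1) K x E2 = mu (E1 `*` E2))%E)].

(** I_i^N, i = 1..N *)
Definition cb_int (N i : nat) : set R :=
  if i == 1%N then (Icc 0 N%:R^-1)
  else Ioc ((i.-1)%:R / N%:R) (i%:R / N%:R).

(** the given version of the Markov kernel of CB_N(A):
    K(x,[0,y]) = N^2 sum_{i,j} mu(Q_ij) 1_{I_i}(x) lambda([0,y] /\ I_j) *)
Definition cb_kernel (mu : set (R * R) -> \bar R) (N : nat) (x y : R) : R :=
  N%:R ^+ 2 * \sum_(1 <= i < N.+1) \sum_(1 <= j < N.+1)
     (fine (mu (cb_int N i `*` cb_int N j)) * \1_(cb_int N i) x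
      * fine (lebesgue_measure ((Icc 0 y) `&` cb_int N j))).

Definition cb_Delta (mu : set (R * R) -> \bar R) (K : R -> probability R R)
    (N : nat) : R :=
  sup [set `| cb_kernel mu N p.1 p.2 - fine (K p.1 (Icc 0 p.2)) | | p in unit_sq].

End CopulaDefs.

(* Main.v *)
Require Import Defs.
From HB Require Import structures.
From mathcomp Require Import all_boot all_order all_algebra.
From mathcomp Require Import all_classical all_reals all_analysis measurable_realfun.
From mathcomp Require Import zify lra.
Import Order.TTheory GRing.Theory Num.Theory.
Import numFieldNormedType.Exports.
Local Open Scope classical_set_scope.
Local Open Scope ring_scope.

Section H.
Context {R : realType}.
Notation lam := (@lebesgue_measure R).

Lemma lamIcc (a b : R) : a <= b -> lam (Icc a b) = (b - a)%:E.
Proof. by move=> ab; rewrite /Icc lebesgue_measure_itv /= lte_fin; case: ltgtP ab => // ->; rewrite subrr. Qed.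

Lemma lamIoc (a b : R) : a <= b -> lam (Ioc a b) = (b - a)%:E.
Proof. by move=> ab; rewrite /Ioc lebesgue_measure_itv /= lte_fin; case: ltgtP ab => // ->; rewrite subrr. Qed.

Lemma h_bound (S : set R) (mS : measurable S) y : 0 <= y ->
  lam (Icc 0 y `&` S) \is a fin_num /\ 0 <= fine (lam (Icc 0 y `&` S)) <= y.
Proof.
move=> y0; set Y := lam (Icc 0 y `&` S).
have hle : (lam (Icc 0 y `&` S) <= y%:E)%E.
  rewrite -[X in (_ <= X%:E)%E](subr0 y) -lamIcc //; apply: le_measure; rewrite ?inE //.
    by apply: measurableI => //; exact: measurable_itv.
  exact: measurable_itv.
have ge := measure_ge0 lam (Icc 0 y `&` S).
have fin : Y \is a fin_num.
  by rewrite ge0_fin_numE // (le_lt_trans hle) // ltry.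
split => //; apply/andP; split; first by rewrite fine_ge0.
by rewrite -lee_fin fineK.
Qed.

Lemma h_split (S : set R) (y y' : R) : 0 <= y -> y <= y' ->
  Icc 0 y' `&` S = (Icc 0 y `&` S) `|` (Ioc y y' `&` S).
Proof.
move=> y0 yy; apply/seteqP; split => x /=; rewrite /Icc /Ioc /= !in_itv /=.
  move=> [/andP[x0 xy'] Sx]; case: (leP x y) => xy.
    by left; rewrite x0.
  by right; rewrite xy'.
case=> [[/andP[x0 xy] Sx]|[/andP[yx xy'] Sx]]; split => //.
  by rewrite x0 (le_trans xy yy).
by rewrite xy' (le_trans y0 (ltW yx)).
Qed.

Lemma h_lip (S : set R) (mS : measurable S) y y' : 0 <= y -> y <= y' ->
  0 <= fine (lam (Icc 0 y' `&` S)) - fine (lam (Icc 0 y `&` S)) <= y' - y.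
Proof.
move=> y0 yy.
have mI : measurable (Icc 0 y `&` S) by apply: measurableI => //; exact: measurable_itv.
have mJ : measurable (Ioc y y' `&` S) by apply: measurableI => //; exact: measurable_itv.
rewrite (@h_split S y y' y0 yy : Icc 0 y' `&` S = _) measureU //; last first.
  apply/seteqP; split => x //= [[]]; rewrite /Icc /Ioc /= !in_itv /=.
  by move=> /andP[_ xy] _ [/andP[yx _] _]; move: (lt_le_trans yx xy); rewrite ltxx.
have [f1 _] := h_bound S mS y y0.

have hle : (lam (Ioc y y' `&` S) <= (y' - y)%:E)%E.
  rewrite -lamIoc //; apply: le_measure; rewrite ?inE //.
  exact: measurable_itv.
have ge := measure_ge0 lam (Ioc y y' `&` S).
have f2 : lam (Ioc y y' `&` S) \is a fin_num.
  by rewrite ge0_fin_numE // (le_lt_trans hle) // ltry.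
rewrite fineD // addrC addKr; apply/andP; split; first exact: fine_ge0.
by rewrite -lee_fin fineK.
Qed.

Lemma sum2_le (N : nat) (a b : nat -> nat -> R) :
  (forall i j, `|a i j| <= b i j) ->
  `|\sum_(1 <= i < N.+1) \sum_(1 <= j < N.+1) a i j| <=
   \sum_(1 <= i < N.+1) \sum_(1 <= j < N.+1) b i j.
Proof.
move=> h; apply: le_trans (ler_norm_sum _ _ _) _; apply: ler_sum => i _.
by apply: le_trans (ler_norm_sum _ _ _) _; apply: ler_sum.
Qed.

Lemma cb_int_meas (N j : nat) : measurable (cb_int (R:=R) N j).
Proof. by rewrite /cb_int; case: ifP => _; exact: measurable_itv. Qed.

Definition cbC (mu : set (R * R) -> \bar R) (N : nat) : R :=
  N%:R ^+ 2 * \sum_(1 <= i < N.+1) \sum_(1 <= j < N.+1)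
     `|fine (mu (cb_int N i `*` cb_int N j))|.

Lemma indic_norm (S : set R) x : `|\1_S x : R| <= 1.
Proof. by rewrite /indic; case: (x \in S); rewrite ?normr0 ?normr1. Qed.

Lemma cb_lip mu N x y y' : 0 <= y -> y <= y' ->
  `|cb_kernel mu N x y' - cb_kernel mu N x y| <= cbC mu N * (y' - y).
Proof.
move=> y0 yy; rewrite /cb_kernel /cbC; set c := N%:R ^+ 2.
have c0 : 0 <= c by rewrite exprn_ge0 ?ler0n.
rewrite -mulrBr normrM -[leRHS]mulrA ger0_norm; last exact: exprn_ge0.
apply: ler_wpM2l => //.
rewrite mulr_suml; under [in leRHS]eq_bigr do rewrite mulr_suml.
rewrite -sumrB; under [in leLHS]eq_bigr do rewrite -sumrB.
apply: sum2_le => i j; rewrite -mulrBr normrM.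
apply: ler_pM => //.
  by rewrite -[X in _ <= X]mulr1 normrM; apply: ler_pM => //; exact: indic_norm.
have := @h_lip _ (cb_int_meas N j) _ _ y0 yy => /andP[h1 h2].
by rewrite ger0_norm.
Qed.

Lemma cb_bnd mu N x y : 0 <= y ->
  `|cb_kernel mu N x y| <= cbC mu N * y.
Proof.
move=> y0; rewrite /cb_kernel /cbC normrM -[leRHS]mulrA ger0_norm; last exact: exprn_ge0.
apply: ler_wpM2l; first exact: exprn_ge0.
rewrite mulr_suml; under [in leRHS]eq_bigr do rewrite mulr_suml.
apply: sum2_le => i j; rewrite normrM.
apply: ler_pM => //.
  by rewrite -[X in _ <= X]mulr1 normrM; apply: ler_pM => //; exact: indic_norm.
have [_ /andP[h1 h2]] := @h_bound _ (cb_int_meas N j) _ y0.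
by rewrite ger0_norm.
Qed.

Lemma cbC_ge0 mu N : 0 <= cbC mu N.
Proof.
rewrite /cbC mulr_ge0 ?exprn_ge0 ?ler0n //.
by apply: sumr_ge0 => i _; apply: sumr_ge0 => j _.
Qed.

Lemma near_le (b x0 : R) : b != x0 -> \forall x \near x0, (x <= b) = (x0 <= b).
Proof.
case: (ltgtP x0 b) => // h _.
  by apply: filterS (lt_nbhsl h) => x xb; rewrite ?(ltW xb) ?(ltW h).
by apply: filterS (lt_nbhsr h) => x bx; rewrite !leNgt ?bx ?h.
Qed.

Lemma inIcc (a b x : R) : (x \in Icc a b) = (a <= x <= b).
Proof. by apply/idP/idP => [/set_mem|h]; rewrite /Icc /= ?in_itv //; apply/mem_set; rewrite /= in_itv. Qed.

Lemma inIoc (a b x : R) : (x \in Ioc a b) = (a < x <= b).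
Proof. by apply/idP/idP => [/set_mem|h]; rewrite /Ioc /= ?in_itv //; apply/mem_set; rewrite /= in_itv. Qed.


Lemma ind_loc (N i : nat) (x0 : R) : (1 <= i <= N)%N -> 0 <= x0 <= 1 ->
  (forall k, (0 < k < N)%N -> x0 != k%:R / N%:R) ->
  \forall x \near x0, 0 <= x <= 1 -> \1_(cb_int N i) x = \1_(cb_int N i) x0 :> R.
Proof.
move=> /andP[i1 iN] /andP[x00 x01] hk.
have N0 : (0 < N)%N by apply: leq_trans iN.
have NR : N%:R != 0 :> R by rewrite pnatr_eq0 -lt0n.
rewrite /indic /cb_int.
have hb : forall k, (0 < k < N)%N -> \forall x \near x0, (x <= k%:R / N%:R) = (x0 <= k%:R / N%:R).
  by move=> k hk'; apply: near_le; rewrite eq_sym; exact: hk.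
have hN : forall x : R, x <= 1 -> (x <= N%:R / N%:R) = true.
  by move=> x x1; rewrite divff.
case: ifP => [_|i1'].
  have [->|N1] := eqVneq N 1%N.
    by apply: filterE => x /andP[x0' x1]; rewrite !inIcc invr1 x0' x1 x00 x01.
  have := hb 1%N; rewrite mul1r => /(_ _) h; have {}h := h _.
  apply: filterS (h _) => [x hx /andP[x0' x1]|]; first by rewrite !inIcc x0' x00 hx.
  by apply/andP; split => //; rewrite ltn_neqAle eq_sym N1.
have i2 : (1 < i)%N by rewrite ltn_neqAle eq_sym i1' i1.
have h1 := hb i.-1 _.
have h1' : \forall x \near x0, (x <= i.-1%:R / N%:R) = (x0 <= i.-1%:R / N%:R).
  apply: h1; apply/andP; split; first by rewrite -ltnS prednK // ltnW.
  by rewrite (leq_trans _ iN) // prednK // ltnW.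
have [iNe|iN'] := eqVneq i N.
  apply: filterS h1' => x hx /andP[_ x1]; rewrite !inIoc !ltNge hx iNe.
  by rewrite !hN.
have h2 : \forall x \near x0, (x <= i%:R / N%:R) = (x0 <= i%:R / N%:R).
  by apply: hb; rewrite (ltn_trans _ i2) //= ltn_neqAle iN' iN.
by apply: filterS2 h1' h2 => x hx hx' _; rewrite !inIoc !ltNge hx hx'.
Qed.

Lemma ind_loc_all (N : nat) (x0 : R) : 0 <= x0 <= 1 ->
  (forall k, (0 < k < N)%N -> x0 != k%:R / N%:R) ->
  \forall x \near x0, 0 <= x <= 1 -> forall i, (1 <= i <= N)%N ->
     \1_(cb_int N i) x = \1_(cb_int N i) x0 :> R.
Proof.
move=> x01 hk.
have hall : \forall x \near x0, forall i : 'I_N.+1, (1 <= i <= N)%N -> 0 <= x <= 1 ->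
     \1_(cb_int N i) x = \1_(cb_int N i) x0 :> R.
  apply: (@filter_forall R 'I_N.+1 (fun (i : 'I_N.+1) x => (1 <= i <= N)%N -> 0 <= x <= 1 ->
     \1_(cb_int N i) x = \1_(cb_int N i) x0 :> R) (nbhs x0) _) => i; case: (boolP (1 <= i <= N)%N) => hi.
    by apply: filterS (@ind_loc N i x0 hi x01 hk) => x h _.
  by apply: filterE => x.
apply: filterS hall => x h x01' i hi.
have iN1 : (i < N.+1)%N by case/andP: hi.
exact: (h (Ordinal iN1) hi x01').
Qed.

Lemma cb_const (mu : set (R * R) -> \bar R) N x x' y :
  (forall i, (1 <= i <= N)%N -> \1_(cb_int N i) x = \1_(cb_int N i) x' :> R) ->
  cb_kernel mu N x y = cb_kernel mu N x' y.
Proof.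
move=> h; rewrite /cb_kernel; congr (_ * _); apply: eq_big_nat => i /andP[i1 iN].
by apply: eq_bigr => j _; rewrite h // i1 -ltnS.
Qed.

Lemma grid_choice (N : nat) (x0 : R) : (0 < N)%N ->
  exists M, (M = N \/ M = N.+1) /\ forall k, (0 < k < M)%N -> x0 != k%:R / M%:R.
Proof.
move=> N0.
case: (pselect (forall k, (0 < k < N)%N -> x0 != k%:R / N%:R)) => h.
  by exists N; split => //; left.
exists N.+1; split; first by right.
move=> k' /andP[k'0 k'N]; apply/negP => /eqP xk'.
apply: h => k /andP[k0 kN]; apply/negP => /eqP xk.
have e : (k' * N = k * N.+1)%N.
  apply/eqP; rewrite -(eqr_nat R) !natrM -eqr_div ?pnatr_eq0 -?lt0n //.
  by rewrite -xk' -xk.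
have [k'k|kk'] := leqP k' k.
  have : (k' * N <= k * N)%N by rewrite leq_mul2r k'k orbT.
  rewrite e; lia.
have : ((k.+1) * N <= k' * N)%N by rewrite leq_mul2r kk' orbT.
rewrite e; lia.
Qed.

Lemma fK_bnd (K : R -> probability R R) x y : `|fine (K x (Icc 0 y))| <= 1.
Proof.
have h1 := probability_le1 (K x) (measurable_itv `[0, y]).
have h0 := measure_ge0 (K x) (Icc 0 y).
have fin : K x (Icc 0 y) \is a fin_num.
  by rewrite ge0_fin_numE // (le_lt_trans h1) // ltry.
by rewrite ger0_norm ?fine_ge0 // -lee_fin fineK.
Qed.

Lemma unit_sqP (q : R * R) : unit_sq q -> (0 <= q.1 <= 1) /\ (0 <= q.2 <= 1).
Proof. by case; rewrite /Icc /= !in_itv. Qed.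

Lemma Delta_ge (mu : set (R * R) -> \bar R) (K : R -> probability R R) N (q : R * R) : unit_sq q ->
  `|cb_kernel mu N q.1 q.2 - fine (K q.1 (Icc 0 q.2))| <= cb_Delta mu K N.
Proof.
move=> Sq; apply: ub_le_sup; last by exists q.
exists (cbC mu N + 1) => r [q' Sq' <-].
have [_ /andP[y0 y1]] := unit_sqP _ Sq'.
apply: le_trans (ler_normB _ _) _; apply: lerD; last exact: fK_bnd.
apply: le_trans (cb_bnd _ _ _ _ y0) _.
by rewrite -[leRHS]mulr1 ler_wpM2l // cbC_ge0.
Qed.

Lemma cb_lip_abs (mu : set (R * R) -> \bar R) N x y y' : 0 <= y -> 0 <= y' ->
  `|cb_kernel mu N x y - cb_kernel mu N x y'| <= cbC mu N * `|y - y'|.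
Proof.
move=> y0 y0'; have [yy|yy] := leP y y'.
  by rewrite distrC (distrC y) [`|y' - y|]ger0_norm ?subr_ge0 //; exact: (cb_lip mu N x y y' y0 yy).
rewrite [`|y - y'|]ger0_norm ?subr_ge0 ?(ltW yy) //.
exact: (cb_lip mu N x y' y y0' (ltW yy)).
Qed.
End H.

Theorem proposition3p6 (R : realType) (A : R -> R -> R)
    (mu : {measure set (R * R) -> \bar R}) (K : R -> probability R R) :
  is_copula A -> is_copula_measure A mu -> is_markov_kernel mu K ->
  (exists p : R * R, unit_sq p /\
     ~ ((fun q : R * R => fine (K q.1 (Icc 0 q.2))) @ within unit_sq (nbhs p)
          --> fine (K p.1 (Icc 0 p.2)))) ->
  ~ (cb_Delta mu K @ \oo --> 0).
Proof.
move=> _ _ _ [[a b] [pS pnc]] hD; apply: pnc.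
have [/andP[a0 a1] /andP[b0 b1]] := unit_sqP _ pS.
apply/cvgrPdist_lt => e e0.
have e3 : 0 < e / 3 by rewrite divr_gt0.
have := (cvgrPdist_lt (cb_Delta mu K) 0).1 hD _ e3.
case=> N0 _ hN0.
have [M [hM cM]] := @grid_choice R N0.+1 a (ltn0Sn _).
have MN0 : (N0 <= M)%N by case: hM => ->; rewrite ?leqnSn // ltnW.
have DM : cb_Delta mu K M < e / 3.
  have := hN0 M MN0; rewrite /= sub0r normrN => h.
  exact: le_lt_trans (ler_norm _) h.
set C := cbC mu M.
have C0 : 0 <= C := cbC_ge0 mu M.
have C1 : 0 < C + 1 by rewrite (le_lt_trans C0) // ltrDl.
set d := e / 3 / (C + 1).
have d0 : 0 < d by rewrite divr_gt0.
have dC : d * (C + 1) = e / 3 by rewrite /d divfK // gt_eqF.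
have a01 : 0 <= a <= 1 by rewrite a0 a1.
have hx := @ind_loc_all R M a a01 cM.
have hy : \forall y \near b, `|b - y| < d.
  exact: (@cvgr_dist_lt _ _ _ (nbhs b) _ id b cvg_id d d0).
have hq : \forall q \near (nbhs a, nbhs b),
   (0 <= q.1 <= 1 -> forall i, (1 <= i <= M)%N ->
     \1_(cb_int M i) q.1 = \1_(cb_int M i) a :> R) /\ `|b - q.2| < d.
  by apply/filter2P; eexists (_, _); first (split; [exact: hx|exact: hy]); move=> x y hx' hy'; split.
rewrite near_withinE; apply: filterS hq => q [hq1 hq2] Sq.
have [/andP[q10 q11] /andP[q20 q21]] := unit_sqP _ Sq.
have q01 : 0 <= q.1 <= 1 by rewrite q10 q11.
have gc := @cb_const R mu M q.1 a b (hq1 q01).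
have t1 := le_lt_trans (Delta_ge mu K M (a, b) pS) DM.
have t3 := le_lt_trans (Delta_ge mu K M q Sq) DM.
have t2 : `|cb_kernel mu M a b - cb_kernel mu M q.1 q.2| < e / 3.
  rewrite -gc; apply: le_lt_trans (cb_lip_abs mu M q.1 b q.2 b0 q20) _.
  have n0 := normr_ge0 (b - q.2).
  rewrite -dC; apply: (le_lt_trans (ler_wpM2l C0 (ltW hq2))).
  by rewrite mulrDr mulr1 [d * C]mulrC ltrDl.
move: t1 t2 t3; rewrite /= !ltr_norml => /andP[u1 u2] /andP[v1 v2] /andP[w1 w2].
apply/andP; split; lra.
Qed.
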